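(* Let $\mathfrak P$ be a prime ideal of $\mathcal O$ over $\mathfrak p$, $f_\mathfrak P\in\hat A_\mathfrak p[x]$ the corresponding monic irreducible factor of $f$, $n_\mathfrak P=\deg f_\mathfrak P$, and $\theta_\mathfrak P$ a root of $f_\mathfrak P$ in an algebraic closure $\overline{K}_\mathfrak p$. Let $0\le i<j<n_\mathfrak P$ and let $g_i,g_j\in\hat A_\mathfrak p[x]$ be divisor polynomials of $f_\mathfrak P$ of degrees $i$ and $j$ respectively. Then $$\hat v(g_j(\theta_\mathfrak P))\ \ge\ \hat v(g_i(\theta_\mathfrak P)).$$
   Context: Let $A$ be a Dedekind domain with fraction field $K$, $\mathfrak p$ a nonzero prime ideal of $A$ with discrete valuation $v_\mathfrak p$, $K_\mathfrak p$ the completion of $K$ at $\mathfrak p$, $\hat A_\mathfrak p$ its valuation ring, and $\hat v$ the unique extension of $v_\mathfrak p$ to an algebraic closure $\overline K_\mathfrak p$. Let $f\in A[x]$ be monic, irreducible and separable, $\theta$ a root of $f$, $L=K(\theta)$ and $\mathcal O$ the integral closure of $A$ in $L$. The prime ideals $\mathfrak P$ of $\mathcal O$ over $\mathfrak p$ correspond bijectively to the monic irreducible factors $f_\mathfrak P$ of $f$ in $\hat A_\mathfrak p[x]$. For $g=\sum c_kx^k\in K_\mathfrak p[x]$ put $v_0(g)=\min_k v_\mathfrak p(c_k)$. For $0\le m<n_\mathfrak P$, a divisor polynomial of degree $m$ of $f_\mathfrak P$ is a monic $g_m\in\hat A_\mathfrak p[x]$ of degree $m$ such that $\hat v(g_m(\theta_\mathfrak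 P))\ge \hat v(g(\theta_\mathfrak P))-v_0(g)$ for every $g\in\hat A_\mathfrak p[x]$ of degree $m$ (this condition does not depend on the choice of the root $\theta_\mathfrak P$). *)

(* Defs.v *)
From HB Require Import structures.
From mathcomp Require Import all_boot all_order all_algebra.
Set Implicit Arguments. Unset Strict Implicit. Unset Printing Implicit Defensive.
Import Order.TTheory GRing.Theory Num.Theory.
Local Open Scope ring_scope.

(* A valuation v : F -> G on a field; the value at 0 (= +oo) is not modelled,
   all axioms concern nonzero elements only. *)
Definition is_valuation (F : fieldType) (G : realDomainType) (v : F -> G) : Prop :=
  (forall x y : F, x != 0 -> y != 0 -> v (x * y) = v x + v y) /\
  (forall x y : F, x != 0 -> y != 0 -> x + y != 0 ->
       Num.min (v x) (v y) <= v (x + y)).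

Definition is_discrete_valuation (F : fieldType) (v : F -> int) : Prop :=
  is_valuation v /\ exists pi : F, pi != 0 /\ v pi = 1.

(* v(x) >= N, with v(0) = +oo *)
Definition vge (F : fieldType) (v : F -> int) (x : F) (N : int) : Prop :=
  x = 0 \/ N <= v x.

Definition v_cauchy (F : fieldType) (v : F -> int) (a : nat -> F) : Prop :=
  forall N : int, exists M : nat, forall m n : nat,
    (M <= m)%N -> (M <= n)%N -> vge v (a m - a n) N.

Definition v_converges (F : fieldType) (v : F -> int) (a : nat -> F) (l : F) : Prop :=
  forall N : int, exists M : nat, forall m : nat, (M <= m)%N -> vge v (a m - l) N.

Definition v_complete (F : fieldType) (v : F -> int) : Prop :=
  forall a : nat -> F, v_cauchy v a -> exists l, v_converges v a l.

Definition algebraic_over (Kp : fieldType) (Kbar : fieldType)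
  (iota : {rmorphism Kp -> Kbar}) : Prop :=
  forall z : Kbar, exists p : {poly Kp}, p != 0 /\ root (map_poly iota p) z.

(* membership in \hat A_p[x]: all coefficients in the valuation ring *)
Definition integral_poly (Kp : fieldType) (v : Kp -> int) (p : {poly Kp}) : Prop :=
  forall i : nat, vge v p`_i 0.

Definition unit_intpoly (Kp : fieldType) (v : Kp -> int) (p : {poly Kp}) : Prop :=
  integral_poly v p /\ exists q, integral_poly v q /\ p * q = 1.

Definition irreducible_intpoly (Kp : fieldType) (v : Kp -> int) (p : {poly Kp}) : Prop :=
  [/\ integral_poly v p, p != 0, ~ unit_intpoly v p &
      forall g h, integral_poly v g -> integral_poly v h -> p = g * h ->
        unit_intpoly v g \/ unit_intpoly v h].

Definition v0 (Kp : fieldType) (v : Kp -> int) (g : {poly Kp}) : int :=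
  let s := [seq v c | c <- polyseq g & c != 0] in foldr Num.min (head 0 s) s.

Definition divisor_poly (Kp : fieldType) (v : Kp -> int) (Kbar : fieldType)
  (iota : {rmorphism Kp -> Kbar}) (vhat : Kbar -> rat) (theta : Kbar)
  (m : nat) (gm : {poly Kp}) : Prop :=
  [/\ gm \is monic, integral_poly v gm, size gm = m.+1 &
      forall g : {poly Kp}, integral_poly v g -> size g = m.+1 ->
        vhat (map_poly iota g).[theta] - (v0 v g)%:~R
          <= vhat (map_poly iota gm).[theta]].

(* Main.v *)
Require Import Defs.
From HB Require Import structures.
From mathcomp Require Import all_boot all_order all_algebra.
From mathcomp Require Import lra.
Import Order.TTheory GRing.Theory Num.Theory.
Set Implicit Arguments. Unset Strict Implicit.
Local Open Scope ring_scope.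

Lemma val_sum (F : fieldType) (G : realDomainType) (w : F -> G)
  (hw : is_valuation w) (N : G) (I : Type) (r : seq I) (P : pred I) (f : I -> F) :
  (forall i, P i -> f i = 0 \/ N <= w (f i)) ->
  (\sum_(i <- r | P i) f i) = 0 \/ N <= w (\sum_(i <- r | P i) f i).
Proof.
move=> H; apply: (big_ind (fun x => x = 0 \/ N <= w x)); first by left.
- move=> x y [->|hx]; first by rewrite add0r.
  move=> [->|hy]; first by rewrite addr0; right.
  have [->|hxy] := eqVneq (x + y) 0; first by left.
  have [->|x0] := eqVneq x 0; first by rewrite add0r; right.
  have [->|y0] := eqVneq y 0; first by rewrite addr0; right.
  right; apply: le_trans ((proj2 hw) x y x0 y0 hxy).
  by rewrite le_min hx hy.
- exact: H.
Qed.

Lemma val1 (F : fieldType) (G : realFieldType) (w : F -> G)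
  (hw : is_valuation w) : w 1 = 0.
Proof.
have := (proj1 hw) 1 1 (oner_neq0 _) (oner_neq0 _); rewrite mulr1 => h; lra.
Qed.

Lemma valN (F : fieldType) (G : realFieldType) (w : F -> G)
  (hw : is_valuation w) (x : F) : x != 0 -> w (- x) = w x.
Proof.
move=> x0.
have n1 : (-1 : F) != 0 by rewrite oppr_eq0 oner_neq0.
have := (proj1 hw) _ _ n1 n1; rewrite mulrNN mulr1 (val1 hw) => h.
by rewrite -mulN1r (proj1 hw) //; lra.
Qed.

Lemma valX (F : fieldType) (G : realFieldType) (w : F -> G)
  (hw : is_valuation w) (x : F) n : x != 0 -> w (x ^+ n) = w x *+ n.
Proof.
move=> x0; elim: n => [|n IH]; first by rewrite expr0 mulr0n (val1 hw).
by rewrite exprS (proj1 hw) ?expf_neq0 // IH mulrS.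
Qed.

Lemma theta_int (Kp : fieldType) (v : Kp -> int) (Kbar : fieldType)
  (iota : {rmorphism Kp -> Kbar}) (vhat : Kbar -> rat) (hvhat : is_valuation vhat)
  (hext : forall a : Kp, a != 0 -> vhat (iota a) = (v a)%:~R)
  (fP : {poly Kp}) (hmon : fP \is monic) (hint : Defs.integral_poly v fP)
  (theta : Kbar) (hroot : root (map_poly iota fP) theta) (t0 : theta != 0) :
  0 <= vhat theta.
Proof.
rewrite leNgt; apply/negP => vneg.
have fP0 : fP != 0 by apply: monic_neq0.
move: hroot; rewrite /root horner_coef size_map_poly.
have -> : size fP = (size fP).-1.+1 by rewrite prednK // size_poly_gt0.
set n := (size fP).-1.
rewrite big_ord_recr /=.
have -> : (map_poly iota fP)`_n = 1.
  rewrite coef_map; move/monicP: hmon; rewrite lead_coefE -/n => ->; exact: rmorph1.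
rewrite mul1r addrC addr_eq0 => /eqP hS.
have tn0 : theta ^+ n != 0 by rewrite expf_neq0.
set S := \sum_(_ < _) _ in hS.
have : S = 0 \/ vhat theta *+ n.-1 <= vhat S.
  apply: (val_sum hvhat) => k _.
  rewrite coef_map.
  have [->|ak0] := eqVneq fP`_k 0; first by left; rewrite raddf0 mul0r.
  right.
  have iak : iota fP`_k != 0 by rewrite fmorph_eq0.
  rewrite (proj1 hvhat) ?expf_neq0 // hext // (valX hvhat) //.
  have vk : 0 <= v fP`_k by case: (hint k) => // h; rewrite h eqxx in ak0.
  have hk : (k <= n.-1)%N by rewrite -ltnS prednK // (leq_ltn_trans _ (ltn_ord k)).
  rewrite -(subnKC hk) mulrnDr.
  have h1 : vhat theta *+ (n.-1 - k) <= 0 by rewrite mulrn_wle0 // ltW.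
  have h2 : (0:rat) <= (v fP`_k)%:~R by rewrite ler0z.
  lra.
case=> [S0|].
  by move: tn0; rewrite hS S0 oppr0 eqxx.
have S0 : S != 0 by move: tn0; rewrite hS oppr_eq0.
have eS : vhat S = vhat theta *+ n by rewrite -(valN hvhat S0) -hS (valX hvhat).
rewrite eS.
have n0 : n != 0%N by apply: contraNneq S0 => n0; rewrite /S n0 big_ord0.
case: n {hS tn0 S S0 eS} n0 => [|n] //= _.
rewrite mulrS; lra.
Qed.

Lemma val_add (F : fieldType) (G : realDomainType) (w : F -> G)
  (hw : is_valuation w) (N : G) (x y : F) :
  x = 0 \/ N <= w x -> y = 0 \/ N <= w y -> x + y = 0 \/ N <= w (x + y).
Proof.
move=> hx hy; case: hx => [->|hx]; first by rewrite add0r.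
case: hy => [->|hy]; first by rewrite addr0; right.
have [->|hxy] := eqVneq (x + y) 0; first by left.
have [->|x0] := eqVneq x 0; first by rewrite add0r; right.
have [->|y0] := eqVneq y 0; first by rewrite addr0; right.
right; apply: le_trans (proj2 hw x y x0 y0 hxy).
by rewrite le_min hx hy.
Qed.

Lemma foldr_min_le (l : seq int) d x : x \in l -> foldr Num.min d l <= x.
Proof.
elim: l => //= a l IH; rewrite in_cons => /orP [/eqP ->|h].
  by rewrite ge_min lexx.
by rewrite ge_min (IH h) orbT.
Qed.

Lemma v0_le (Kp : fieldType) (v : Kp -> int) (hv1 : v 1 = 0) (g : {poly Kp}) :
  lead_coef g = 1 -> v0 v g <= 0.
Proof.
move=> lg; rewrite /v0; apply: foldr_min_le.
rewrite -hv1; apply: map_f; rewrite mem_filter oner_neq0 /= -lg lead_coefE.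
apply: mem_nth; rewrite prednK // size_poly_gt0; apply/eqP => g0.
by move: lg; rewrite g0 lead_coef0 => /eqP; rewrite eq_sym oner_eq0.
Qed.

Theorem mainTheorem1
  (Kp : fieldType) (v : Kp -> int)
  (hv : is_discrete_valuation v) (hcomp : v_complete v)
  (Kbar : closedFieldType) (iota : {rmorphism Kp -> Kbar})
  (halg : algebraic_over iota)
  (vhat : Kbar -> rat) (hvhat : is_valuation vhat)
  (hext : forall a : Kp, a != 0 -> vhat (iota a) = (v a)%:~R)
  (fP : {poly Kp}) (hmon : fP \is monic) (hirr : irreducible_intpoly v fP)
  (theta : Kbar) (hroot : root (map_poly iota fP) theta)
  (i j : nat) (hij : (i < j)%N) (hjn : (j < (size fP).-1)%N)
  (gi gj : {poly Kp})
  (hgi : divisor_poly v iota vhat theta i gi)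
  (hgj : divisor_poly v iota vhat theta j gj) :
  vhat (map_poly iota gi).[theta] <= vhat (map_poly iota gj).[theta].
Proof.
case: hgi => mi ii si _; case: hgj => _ _ _ Hj.
have hvv := proj1 hv.
have v1 : v 1 = 0.
  have := proj1 hvv 1 1 (oner_neq0 _) (oner_neq0 _); rewrite mulr1 => h.
  by apply: (addrI (v 1)); rewrite addr0 -h.
set k := (j - i)%N.
have k0 : (0 < k)%N by rewrite subn_gt0.
have gi0 : gi != 0 by apply: monic_neq0.
have key : forall g, Defs.integral_poly v g -> size g = j.+1 -> g \is monic ->
    vhat (map_poly iota g).[theta] <= vhat (map_poly iota gj).[theta].
  move=> g ig sg mg; have := Hj g ig sg.
  have : ((v0 v g)%:~R : rat) <= 0 by rewrite lerz0 v0_le //; apply/monicP.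
  lra.
have igX : Defs.integral_poly v (gi * 'X^k).
  move=> n; rewrite coefMXn; case: ifP => _; [by left|exact: ii].
have sgX : size (gi * 'X^k) = j.+1.
  by rewrite size_mulXn // si addnS /k subnK // ltnW.
have mgX : gi * 'X^k \is monic by rewrite monicMr ?monicXn.
have [t0|t0] := eqVneq theta 0.
  set g := gi + gi * 'X^k.
  have sg : size g = j.+1 by rewrite /g addrC size_polyDl sgX // si ltnS.
  have := key g _ sg.
  rewrite /g rmorphD rmorphM /= map_polyXn hornerD hornerM hornerXn t0 expr0n.
  rewrite (negPf (lt0n_neq0 k0)) mulr0 addr0; apply.
    move=> n; rewrite coefD; apply: (val_add hvv); [exact: ii|exact: igX].
  rewrite monicE addrC lead_coefDl; first by rewrite -monicE.
  by rewrite sgX si ltnS.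
have := key _ igX sgX mgX.
rewrite rmorphM /= map_polyXn hornerM hornerXn.
have [->|gt0] := eqVneq (map_poly iota gi).[theta] 0; first by rewrite mul0r.
rewrite (proj1 hvhat) ?expf_neq0 // (valX hvhat) //.
have : 0 <= vhat theta.
  case: hirr => hint _ _ _.
  exact: (theta_int hvhat hext hmon hint hroot t0).
move=> h; have : 0 <= vhat theta *+ k by rewrite mulrn_wge0.
lra.
Qed.
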